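(* Let $\Theta$ be a typed signature. For every $\varphi\in\mathcal L_{\mathrm{VCL}}(\Theta)$, if $\varphi$ is true at every state of every VCL model over $\Theta$, then $\vdash_{\mathrm{VCL}_\Theta}\varphi$.
   Context: A typed signature is $\Theta=(\mathrm{Ag},X,\{D_x\}_{x\in X})$ with $\mathrm{Ag}$ a finite non-empty set of agents, $X$ a finite set of variables, each $D_x$ finite non-empty. $\overline C=\mathrm{Ag}\setminus C$, $\Sigma_C=\prod_{i\in C}\Sigma_i$ ($\Sigma_\varnothing$ a singleton). $\mathcal L_{\mathrm{VCL}}(\Theta)$: $\varphi::=\top\mid(x{=}c)\mid\neg\varphi\mid\varphi\wedge\psi\mid[C]\varphi$ ($x\in X,c\in D_x,C\subseteq\mathrm{Ag}$). A VCL model is $\mathcal M=(S,\{\Sigma_i\},o,\pi)$ with $S,\Sigma_i\neq\varnothing$, $o:S\times\Sigma_{\mathrm{Ag}}\to S$, $\pi:S\to\prod_x D_x$; $(x{=}c)$ true at $s$ iff $\pi(s)(x)=c$; Boolean clauses usual; $[C]\varphi$ true at $s$ iff $\exists\alpha_C\in\Sigma_C\,\forall\beta_{\overline C}\in\Sigma_{\overline C}$: $\varphi$ true at $o(s,\alpha_C\sqcup\beta_{\overline C})$. The Hilbert system $\mathrm{VCL}_\Theta$ has: all instances of classical propositional tautologies; for $C,D\subseteq\mathrm{Ag}$: (C1) $[C](\varphi\wedge\psi)\to[C]\varphi$; (C2) $\neg[C]\bot$; (C3) $[C]\top$; (C4) $[C]\varphi\wedge[D]\psi\to[C\cup D](\varphi\wedge\psi)$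 when $C\cap D=\varnothing$; (C5) $\neg[\varnothing]\neg\varphi\to[\mathrm{Ag}]\varphi$; (V1) $\bigvee_{c\in D_x}(x{=}c)$; (V2) $(x{=}c)\to\neg(x{=}d)$ for distinct $c,d\in D_x$; rules MP and RE (from $\vdash\varphi\leftrightarrow\psi$ infer $\vdash[C]\varphi\leftrightarrow[C]\psi$). *)

(* Defs.v *)
From mathcomp Require Import all_boot.
Set Implicit Arguments. Unset Strict Implicit. Unset Printing Implicit Defensive.

Record signature := Signature {
  Ag : finType;
  Var : finType;
  Dom : Var -> finType;
  Ag_ne : 0 < #|Ag|;
  Dom_ne : forall x, 0 < #|Dom x|
}.

Section VCL.
Variable Th : signature.

Inductive form : Type :=
| fTop : form
| fEq : forall x : Var Th, @Dom Th x -> form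
| fNeg : form -> form
| fAnd : form -> form -> form
| fBox : {set Ag Th} -> form -> form.

Definition fBot := fNeg fTop.
Definition fOr p q := fNeg (fAnd (fNeg p) (fNeg q)).
Definition fImp p q := fNeg (fAnd p (fNeg q)).
Definition fIff p q := fAnd (fImp p q) (fImp q p).
Definition bigOr (l : seq form) := foldr fOr fBot l.
Definition varDisj (x : Var Th) := bigOr [seq fEq c | c <- enum (@Dom Th x)].

(* Instances of classical propositional tautologies: formulas true under every
   Boolean assignment to their maximal non-Boolean subformulas (atoms
   (x=c) and [C]phi). *)
Fixpoint peval (v : form -> bool) (p : form) : bool :=
  match p with
  | fTop => true
  | fNeg q => ~~ peval v q
  | fAnd q r => peval v q && peval v r
  | _ => v p
  end.
Definition taut_instance (p : form) := forall v, peval v p.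

Inductive provable : form -> Prop :=
| Ax_taut p : taut_instance p -> provable p
| Ax_C1 C p q : provable (fImp (fBox C (fAnd p q)) (fBox C p))
| Ax_C2 C : provable (fNeg (fBox C fBot))
| Ax_C3 C : provable (fBox C fTop)
| Ax_C4 C D p q : C :&: D = set0 ->
    provable (fImp (fAnd (fBox C p) (fBox D q)) (fBox (C :|: D) (fAnd p q)))
| Ax_C5 p : provable (fImp (fNeg (fBox set0 (fNeg p))) (fBox setT p))
| Ax_V1 x : provable (varDisj x)
| Ax_V2 x (c d : @Dom Th x) : c != d -> provable (fImp (fEq c) (fNeg (fEq d)))
| R_MP p q : provable p -> provable (fImp p q) -> provable q
| R_RE C p q : provable (fIff p q) -> provable (fIff (fBox C p) (fBox C q)).

Record model := Model {
  St : Type;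
  Strat : Ag Th -> Type;
  St_ne : inhabited St;
  Strat_ne : forall i, inhabited (Strat i);
  out : St -> (forall i, Strat i) -> St;
  val : St -> forall x : Var Th, @Dom Th x
}.

Definition join (M : model) (C : {set Ag Th})
  (a : forall i, i \in C -> Strat M i) (b : forall i, i \notin C -> Strat M i)
  : forall i, Strat M i :=
  fun i => match boolP (i \in C) with
           | AltTrue h => a i h
           | AltFalse h => b i h
           end.

Fixpoint sat (M : model) (s : St M) (p : form) : Prop :=
  match p with
  | fTop => True
  | fEq x c => val s x = c
  | fNeg q => ~ @sat M s q
  | fAnd q r => @sat M s q /\ @sat M s r
  | fBox C q => exists a : (forall i, i \in C -> Strat M i),
                 forall b : (forall i, i \notin C -> Strat M i),
                   @sat M (out s (join a b)) q
  end.

Definition valid (p : form) := forall (M : model) (s : St M), @sat M s p.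
End VCL.

(* Main.v *)
Require Import Defs.
From mathcomp Require Import all_boot.
From Stdlib Require Import Classical ClassicalEpsilon FunctionalExtensionality Lia.
From mathcomp Require Import zify.
Set Implicit Arguments. Unset Strict Implicit. Unset Printing Implicit Defensive.

Section Prop1.
Variable Th : signature.
Notation form := (form Th).
Implicit Types (p q r a b c d : form) (v : form -> bool) (l : seq form).

Definition conj (l : seq form) := foldr (@fAnd Th) (@fTop Th) l.

Lemma peval_conj v l : peval v (conj l) = all (peval v) l.
Proof. by elim: l => //= a l ->. Qed.

Lemma peval_bigOr v l : peval v (bigOr l) = has (peval v) l.
Proof. elim: l => //= a l ->. by case: (peval v a); case: (has _ _). Qed.

Ltac taut := let v := fresh "v" in move=> v; rewrite ?/fBot /=;
  repeat match goal with
  | |- context [peval ?v ?p] => destruct (peval v p)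
  | |- context [?v (fBox ?C ?p)] => destruct (v (fBox C p))
  end; done.

Lemma pMP p q : provable p -> taut_instance (fImp p q) -> provable q.
Proof. move=> hp ht; apply: R_MP hp (Ax_taut ht). Qed.

Lemma pMP2 p q r : provable p -> provable q ->
  taut_instance (fImp p (fImp q r)) -> provable r.
Proof. move=> hp hq ht; apply: R_MP hq _; apply: R_MP hp (Ax_taut ht). Qed.

Lemma pMP3 p q r s : provable p -> provable q -> provable r ->
  taut_instance (fImp p (fImp q (fImp r s))) -> provable s.
Proof. move=> hp hq hr ht; apply: R_MP hr _; apply: R_MP hq _; apply: R_MP hp (Ax_taut ht). Qed.

Lemma box_mono C p q : provable (fImp p q) -> provable (fImp (fBox C p) (fBox C q)).
Proof.
move=> h.
have h1 : provable (fIff p (fAnd q p)) by apply: pMP h _; taut.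
have h2 := R_RE C h1.
have h3 := Ax_C1 C q p.
apply: pMP2 h2 h3 _; taut.
Qed.

Lemma prov_conj (T : Type) (f : T -> form) (s : seq T) :
  (forall x, provable (f x)) -> provable (conj (map f s)).
Proof.
move=> h; elim: s => [|x s ih] /=; first by apply: Ax_taut; taut.
apply: pMP2 (h x) ih _; taut.
Qed.


Lemma pImp_conj_mem (T : eqType) (f : T -> form) (s : seq T) x :
  x \in s -> provable (fImp (conj (map f s)) (f x)).
Proof.
elim: s => //= y s ih; rewrite in_cons => /orP[/eqP->|/ih h].
  by apply: Ax_taut; taut.
by apply: pMP h _; taut.
Qed.

Lemma disj_bot (x : Var Th) (l : seq (Dom x)) v :
  peval v (conj [seq fNeg (fEq e) | e <- l]) -> peval v (bigOr [seq fEq e | e <- l]) -> False.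
Proof.
elim: l => //= e l ih.
rewrite peval_conj peval_bigOr; rewrite peval_conj peval_bigOr in ih.
by case: (v (fEq e)) => //= h1 /negbNE h2; apply: ih h1 h2.
Qed.

Fixpoint sub p : seq form := p :: match p with
  | fNeg q => sub q | fAnd q r => sub q ++ sub r | fBox _ q => sub q | _ => [::] end.

Lemma sub_trans p q r : List.In q (sub p) -> List.In r (sub q) -> List.In r (sub p).
Proof.
elim: p => [|x c|p ih|p ihp p' ihp'|C p ih] /=.
- by move=> [<-|[]].
- by move=> [<-|[]].
- by move=> [<-|h] //= hr; right; apply: ih.
- move=> [<-|h] //= hr; right; apply/List.in_or_app.
  by case: (List.in_app_or _ _ _ h) => {}h; [left; apply: ihp | right; apply: ihp'].
- by move=> [<-|h] //= hr; right; apply: ih.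
Qed.

Lemma In_nth' (l : seq form) q : List.In q l -> exists k, k < size l /\ nth (@fTop Th) l k = q.
Proof.
elim: l => //= a l ih [->|/ih [k [hk e]]]; first by exists 0.
by exists k.+1.
Qed.

End Prop1.

Lemma join_inE Th (M : model Th) (C : {set Ag Th}) a b (i : Ag Th) (h : i \in C) : @join Th M C a b i = a i h.
Proof.
rewrite /join. case: {-}_ / boolP => h'. by rewrite (bool_irrelevance h' h).
by exfalso; move: h'; rewrite h.
Qed.
Lemma join_outE Th (M : model Th) (C : {set Ag Th}) a b (i : Ag Th) (h : i \notin C) : @join Th M C a b i = b i h.
Proof.
rewrite /join. case: {-}_ / boolP => h'. by exfalso; move: h; rewrite h'.
by rewrite (bool_irrelevance h' h).
Qed.

Definition pb (P : Prop) : bool := if excluded_middle_informative P then true else false.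
Lemma pbE (P : Prop) : pb P = true <-> P.
Proof. by rewrite /pb; case: excluded_middle_informative. Qed.

Section Canon.
Variable Th : signature.
Variable phi0 : form Th.
Notation form := (form Th).
Implicit Types (p q r : form) (v : form -> bool) (l : seq form).

Definition Phi := sub phi0.
Definition n := size Phi.
Definition Atom := {ffun 'I_n -> bool}.
Definition lit (b : bool) p := if b then p else fNeg p.
Definition dlt (A : Atom) := conj [seq lit (A k) (nth (@fTop Th) Phi k) | k <- enum 'I_n].
Definition der (A : Atom) p := provable (fImp (dlt A) p).
Definition cons (A : Atom) := ~ provable (fNeg (dlt A)).

Ltac taut := let v := fresh "v" in move=> v; rewrite ?/fBot /=;
  repeat match goal with
  | |- context [peval ?v ?p] => destruct (peval v p)
  | |- context [?v (fBox ?C ?p)] => destruct (v (fBox C p))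
  end; done.

Lemma der_prov A p : provable p -> der A p.
Proof. by move=> h; apply: pMP h _; taut. Qed.
Lemma der_MP A p q : der A p -> provable (fImp p q) -> der A q.
Proof. by move=> h1 h2; apply: pMP2 h1 h2 _; taut. Qed.
Lemma der_MP2 A p q r : der A p -> der A q -> provable (fImp p (fImp q r)) -> der A r.
Proof. by move=> h1 h2 h3; apply: pMP3 h1 h2 h3 _; taut. Qed.

Lemma decide A p : List.In p Phi -> der A p \/ der A (fNeg p).
Proof.
move=> /In_nth' [k [hk e]].
have key : forall v, peval v (dlt A) -> peval v (lit (A (Ordinal hk)) p).
  move=> v; rewrite /dlt peval_conj all_map => /allP /(_ (Ordinal hk) (mem_enum _ _)) /=.
  by rewrite e.
case Hk: (A (Ordinal hk)); [left|right]; apply: Ax_taut => v /=; have := key v;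
  rewrite Hk /=; case: (peval v (dlt A)) => //; by case: (peval v p) => // /(_ isT).
Qed.

Lemma excl A p : cons A -> der A p -> der A (fNeg p) -> False.
Proof. by move=> hc h1 h2; apply: hc; apply: pMP2 h1 h2 _; taut. Qed.

Lemma der_box_mono A C p q : der A (fBox C p) -> provable (fImp p q) -> der A (fBox C q).
Proof. by move=> h1 h2; apply: der_MP h1 (box_mono _ h2). Qed.

Lemma der_C4 A (C D : {set Ag Th}) p q : der A (fBox C p) -> der A (fBox D q) ->
  C :&: D = set0 -> der A (fBox (C :|: D) (fAnd p q)).
Proof. by move=> h1 h2 e; apply: der_MP2 h1 h2 _; apply: pMP (Ax_C4 p q e) _; taut. Qed.

Lemma der_boxT A C : der A (fBox C (@fTop Th)).
Proof. exact: der_prov _ (Ax_C3 C). Qed.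

Lemma der_box_prov A C p : provable p -> der A (fBox C p).
Proof. by move=> h; apply: der_box_mono (der_boxT A C) _; apply: pMP h _; taut. Qed.

Lemma der_coal_mono A (E C : {set Ag Th}) p : E \subset C -> der A (fBox E p) -> der A (fBox C p).
Proof.
move=> hs h.
have e : E :|: (C :\: E) = C by rewrite -{2}(setID C E) (setIidPr hs).
have := der_C4 h (der_boxT A (C :\: E)) _.
rewrite e => /(_ _) h'; apply: der_box_mono (h' _) _; first by rewrite setDE setICA setICr setI0.
by apply: Ax_taut; taut.
Qed.

Lemma der_box0_conj (T : Type) (f : T -> form) (s : seq T) A :
  (forall x, der A (fBox set0 (f x))) -> der A (fBox set0 (conj (map f s))).
Proof.
move=> h; elim: s => [|x s ih] /=; first exact: der_boxT.
have := der_C4 (h x) ih (setI0 _); by rewrite setU0.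
Qed.

Definition atv v : Atom := [ffun k : 'I_n => peval v (nth (@fTop Th) Phi k)].
Lemma dlt_atv v : peval v (dlt (atv v)).
Proof.
rewrite /dlt peval_conj all_map; apply/allP => k _ /=; rewrite ffunE.
by rewrite /lit; case E: (peval v (nth (fTop Th) Phi k)) => /=; rewrite ?E.
Qed.

Lemma conj_atoms v (f : Atom -> form) : peval v (conj (map f (enum {: Atom}))) -> peval v (f (atv v)).
Proof. by rewrite peval_conj all_map => /allP; apply; rewrite mem_enum. Qed.

Lemma F3 G Psi rho : (forall A : Atom, der G (fBox set0 (fImp (fAnd Psi (dlt A)) rho))) ->
  der G (fBox set0 (fImp Psi rho)).
Proof.
move=> h; apply: der_box_mono (der_box0_conj (enum {: Atom}) h) _.
apply: Ax_taut => v /=; case H: (peval v (conj _)) => //=.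
move: (conj_atoms H) => /=; rewrite dlt_atv.
by case: (peval v Psi); case: (peval v rho).
Qed.

Lemma init_atom p : List.In p Phi -> ~ provable p -> exists G, cons G /\ der G (fNeg p).
Proof.
move=> hp np; apply: NNPP => hn; apply: np.
have h : forall A : Atom, provable (fImp (dlt A) p).
  move=> A; case: (classic (cons A)) => hc.
    case: (decide A hp) => // hd; by exfalso; apply: hn; exists A.
  by apply: pMP (NNPP _ hc) _; taut.
apply: pMP (prov_conj (enum {: Atom}) h) _.
move=> v /=; case H: (peval v (conj _)) => //=.
by move: (conj_atoms H) => /=; rewrite dlt_atv; case: (peval v p).
Qed.


Lemma sub_head p : List.In p (sub p).
Proof. by case: p => *; left. Qed.

Lemma cons_bot G : cons G -> der G (fNeg (@fTop Th)) -> False.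
Proof. by move=> hc hd; apply: hc; apply: pMP hd _; taut. Qed.

Lemma der_conj (T : Type) (f : T -> form) (s : seq T) G :
  (forall x, der G (f x)) -> der G (conj (map f s)).
Proof.
move=> h; elim: s => [|x s ih] /=; first by apply: der_prov; apply: Ax_taut; taut.
by apply: der_MP2 (h x) ih _; apply: Ax_taut; taut.
Qed.

Lemma pconst (T : Type) (s : seq T) q : provable (fImp q (conj (map (fun _ => q) s))).
Proof.
elim: s => [|x s ih] /=; first by apply: Ax_taut; taut.
by apply: pMP ih _; taut.
Qed.

Definition sT := (({set Ag Th} * form) * nat)%type.
Definition s0 : sT := ((set0, @fTop Th), 0).
Definition chiD (g : Ag Th -> {set Ag Th} * form) (D : {set Ag Th}) :=
  conj [seq (g i).2 | i <- enum D].
Definition agree G g D := D != set0 /\ (forall i, i \in D -> (g i).1 = D) /\ der G (fBox D (chiD g D)).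
Definition AD G g := [seq D <- enum {: {set Ag Th}} | pb (agree G g D)].
Definition Psi G g := conj [seq chiD g D | D <- AD G g].
Definition EU G g := \bigcup_(D <- AD G g) D.
Definition SS G g := [seq A <- enum {: Atom} | pb (~ der G (fBox set0 (fNeg (fAnd (Psi G g) (dlt A)))))].
Definition outF (G : Atom) (s : Ag Th -> sT) : Atom :=
  nth G (SS G (fun i => (s i).1)) ((\sum_i (s i).2) %% size (SS G (fun i => (s i).1))).

Lemma inhD (x : Var Th) : inhabited (Dom x).
Proof. by case/card_gt0P: (@Dom_ne Th x) => d _; exact (inhabits d). Qed.

Definition valF (G : Atom) (x : Var Th) : Dom x :=
  epsilon (inhD x) (fun d => ~ der G (fNeg (fEq d))).

Definition CM : model Th :=
  @Model Th Atom (fun _ => sT) (inhabits [ffun _ => false]) (fun _ => inhabits s0) outF valF.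

Lemma AD_agree G g D : D \in AD G g -> agree G g D.
Proof. by rewrite mem_filter mem_enum andbT => /pbE. Qed.

Lemma EU_box G g : der G (fBox (EU G g) (Psi G g)).
Proof.
rewrite /EU /Psi.
have : uniq (AD G g) by apply: filter_uniq; apply: enum_uniq.
have : forall D, D \in AD G g -> agree G g D by move=> D; apply: AD_agree.
elim: (AD G g) => [|D l ih] hag hu /=.
  by rewrite big_nil; apply: der_boxT.
rewrite big_cons; move: hu => /andP[Dl ul].
have [_ [h1 h1']] := hag D (mem_head _ _).
apply: der_C4 h1' (ih _ ul) _.
  by move=> D' hD'; apply: hag; rewrite in_cons hD' orbT.
apply/setP => i; rewrite inE in_set0; apply/negP => /andP[iD].
rewrite bigcup_seq => /bigcupP[D' D'l iD'].
have [_ [h2 _]] : agree G g D' by apply: hag; rewrite in_cons D'l orbT.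
have e : D = D' by rewrite -(h1 i iD) (h2 i iD').
by move: Dl; rewrite e D'l.
Qed.

Lemma EU_sub G g (C : {set Ag Th}) : (forall i, i \notin C -> (g i).1 = set0) -> EU G g \subset C.
Proof.
move=> hg; apply/subsetP => i; rewrite /EU bigcup_seq => /bigcupP[D hD iD].
have [hne [h1 _]] := AD_agree hD.
apply/negPn/negP => iC; have := h1 i iD; rewrite hg // => e.
by rewrite -e eqxx in hne.
Qed.

Lemma S_mem G g A : A \in SS G g <-> ~ der G (fBox set0 (fNeg (fAnd (Psi G g) (dlt A)))).
Proof. by rewrite mem_filter mem_enum andbT; apply: pbE. Qed.

Lemma S_nonempty G g : cons G -> 0 < size (SS G g).
Proof.
move=> hc; case E: (SS G g) => [|A0 l] //; exfalso.
have h : forall A, der G (fBox set0 (fImp (fAnd (Psi G g) (dlt A)) (fNeg (@fTop Th)))).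
  move=> A; have hA : der G (fBox set0 (fNeg (fAnd (Psi G g) (dlt A)))).
    by apply: NNPP => nA; have := proj2 (S_mem G g A) nA; rewrite E.
  by apply: der_box_mono hA _; apply: Ax_taut; taut.
have := der_C4 (EU_box G g) (F3 h) (setI0 _); rewrite setU0 => h2.
have h3 : der G (fBox (EU G g) (fNeg (@fTop Th))) by apply: der_box_mono h2 _; apply: Ax_taut; taut.
apply: (cons_bot hc); apply: der_MP2 h3 (der_prov _ (Ax_C2 (EU G g))) _; apply: Ax_taut; taut.
Qed.

Lemma S_cons G g A : A \in SS G g -> cons A /\ ~ provable (fNeg (fAnd (Psi G g) (dlt A))).
Proof.
move=> hA; have h2 : ~ provable (fNeg (fAnd (Psi G g) (dlt A))).
  by move=> hp; apply: (proj1 (S_mem G g A) hA); apply: der_box_prov.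
split => // hp; apply: h2; apply: pMP hp _; taut.
Qed.

Lemma S_der G g A q : A \in SS G g -> provable (fImp (Psi G g) q) -> List.In q Phi -> der A q.
Proof.
move=> hA hq hin; case: (decide A hin) => // hn; exfalso.
by apply: (proj2 (S_cons hA)); apply: pMP2 hn hq _; taut.
Qed.

Lemma S_box0neg G g A q : A \in SS G g -> der G (fBox set0 (fNeg q)) -> ~ der A q.
Proof.
move=> hA h hd; apply: (proj1 (S_mem G g A) hA); apply: der_box_mono h _.
by apply: pMP hd _; taut.
Qed.

Lemma S_box0 G g A q : A \in SS G g -> der G (fBox set0 q) -> List.In q Phi -> der A q.
Proof.
move=> hA h hin; case: (decide A hin) => // hn; exfalso.
apply: (S_box0neg hA _ hn); apply: der_box_mono h _; apply: Ax_taut; taut.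
Qed.

Lemma valF_spec G x : cons G -> ~ der G (fNeg (fEq (valF G x))).
Proof.
move=> hc; rewrite /valF; apply: (epsilon_spec (inhD x) (fun d => ~ der G (fNeg (fEq d)))); apply: NNPP => hn.
have h : forall d, der G (fNeg (@fEq Th x d)) by move=> d; apply: NNPP => nd; apply: hn; exists d.
have hV : der G (bigOr [seq @fEq Th x c | c <- enum (Dom x)]) by exact: der_prov _ (Ax_V1 x).
apply: (cons_bot hc); apply: der_MP2 (der_conj (enum (Dom x)) h) hV _.
apply: Ax_taut => v /=.
case H1: (peval v (conj _)); case H2: (peval v (bigOr _)) => //=.
by exfalso; apply: disj_bot H1 H2.
Qed.

Lemma modn_fix s k R : 0 < s -> k < s -> (s - R %% s + k + R) %% s = k.
Proof.
move=> sp ks; have hr := ltn_pmod R sp.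
rewrite {2}(divn_eq R s).
have -> : s - R %% s + k + (R %/ s * s + R %% s) = (R %/ s).+1 * s + k.
  rewrite mulSn; move: hr; set r := R %% s; set t := R %/ s * s => hr; lia.
by rewrite modnMDl modn_small.
Qed.


Lemma truth p : List.In p Phi -> forall G, cons G -> (@sat Th CM G p <-> der G p).
Proof.
elim: p => [|x c|q ih|q1 ih1 q2 ih2|C q ih] hin G hc /=.
- by split => // _; apply: der_prov; apply: Ax_taut; taut.
- split.
  + move=> e; case: (decide G hin) => // hn; exfalso.
    by apply: (@valF_spec G x hc); rewrite e.
  + move=> hd; apply/eqP/negPn/negP => ne; apply: (@valF_spec G x hc).
    by apply: der_MP hd (Ax_V2 _); rewrite eq_sym.
- have hq : List.In q Phi by apply: sub_trans hin _; right; apply: sub_head.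
  rewrite (ih hq G hc); split.
    by move=> nd; case: (decide G hq).
  by move=> hn hd; apply: excl hc hd hn.
- have hq1 : List.In q1 Phi.
    by apply: sub_trans hin _; right; apply/List.in_or_app; left; apply: sub_head.
  have hq2 : List.In q2 Phi.
    by apply: sub_trans hin _; right; apply/List.in_or_app; right; apply: sub_head.
  rewrite (ih1 hq1 G hc) (ih2 hq2 G hc); split.
    by case=> h1 h2; apply: der_MP2 h1 h2 _; apply: Ax_taut; taut.
  by move=> h; split; apply: der_MP h _; apply: Ax_taut; taut.
- have hq : List.In q Phi by apply: sub_trans hin _; right; apply: sub_head.
  split.
  + move=> [a Ha]; apply: NNPP => nd.
    have hneg : der G (fNeg (fBox C q)) by case: (decide G hin).
    case: (eqVneq C setT) => [eC | nC].
    * subst C.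
      have h0 : der G (fBox set0 (fNeg q)).
        by apply: der_MP2 hneg (der_prov _ (Ax_C5 q)) _; apply: Ax_taut; taut.
      have := Ha (fun i (_ : i \notin setT) => s0).
      set g := (fun i => ((@join Th CM setT a (fun i (_ : i \notin setT) => s0) i : sT).1)).
      have hA : outF G (@join Th CM setT a (fun i (_ : i \notin setT) => s0)) \in SS G g.
        by rewrite /outF; apply: mem_nth; rewrite ltn_pmod // S_nonempty.
      have [hcA _] := S_cons hA.
      by move/(ih hq _ hcA); apply: S_box0neg hA h0.
    * have [j hj] : exists j, j \notin C.
        apply: NNPP => hn; move/eqP: nC; apply; apply/setP => i; rewrite inE.
        by apply/negPn/negP => hi; apply: hn; exists i.
      pose b0 := fun i (_ : i \notin C) => s0.
      pose g0 := fun i => ((@join Th CM C a b0 i : sT).1).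
      have hsub : EU G g0 \subset C.
        by apply: EU_sub => i hi; rewrite /g0 (join_outE _ _ hi).
      have [A [hA nA]] : exists A, A \in SS G g0 /\ ~ der A q.
        apply: NNPP => hn; apply: nd.
        have h : forall A, der G (fBox set0 (fImp (fAnd (Psi G g0) (dlt A)) q)).
          move=> A; case: (boolP (A \in SS G g0)) => hA'.
            have hdA : der A q by apply: NNPP => nA'; apply: hn; exists A.
            by apply: der_box_prov; apply: pMP hdA _; taut.
          have hA2 : der G (fBox set0 (fNeg (fAnd (Psi G g0) (dlt A)))).
            by apply: NNPP => nA2; case/negP: hA'; apply/(S_mem G g0 A).
          by apply: der_box_mono hA2 _; apply: Ax_taut; taut.
        have := der_C4 (EU_box G g0) (F3 h) (setI0 _); rewrite setU0 => h2.
        apply: der_coal_mono hsub _; apply: der_box_mono h2 _; apply: Ax_taut; taut.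
      have spos := S_nonempty g0 hc.
      pose R0 := \sum_(i | i != j) (@join Th CM C a b0 i : sT).2.
      pose T := (size (SS G g0) - R0 %% size (SS G g0)) + index A (SS G g0).
      pose b := fun i (_ : i \notin C) => (if i == j then ((set0, @fTop Th), T) else s0 : sT).
      have eg : (fun i => (@join Th CM C a b i : sT).1) = g0.
        apply: functional_extensionality => i; rewrite /g0.
        case: (boolP (i \in C)) => hi; first by rewrite !(join_inE _ _ hi).
        by rewrite !(join_outE _ _ hi) /b /b0; case: (i == j).
      have es : \sum_i (@join Th CM C a b i : sT).2 = T + R0.
        rewrite (bigD1 j) //= (join_outE _ _ hj) /b eqxx /=; congr (_ + _).
        apply: eq_bigr => i hij; case: (boolP (i \in C)) => hi; first by rewrite !(join_inE _ _ hi).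
        by rewrite !(join_outE _ _ hi) /b /b0 (negbTE hij).
      have eo : outF G (@join Th CM C a b) = A.
        rewrite /outF eg es /T modn_fix //; first exact: nth_index.
        by rewrite index_mem.
      have := Ha b; rewrite /= eo => /(ih hq _ (proj1 (S_cons hA))).
      exact: nA.
  + move=> hd; exists (fun i (_ : i \in C) => (((C, q), 0) : sT)) => b.
    set g := (fun i => ((@join Th CM C (fun i (_ : i \in C) => (((C, q), 0) : sT)) b i : sT).1)).
    have hA : outF G (@join Th CM C (fun i (_ : i \in C) => (((C, q), 0) : sT)) b) \in SS G g.
      by rewrite /outF; apply: mem_nth; rewrite ltn_pmod // S_nonempty.
    have [hcA _] := S_cons hA.
    apply/(ih hq _ hcA).
    case: (eqVneq C set0) => [eC | nC].
      by subst C; apply: S_box0 hA hd hq.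
    apply: S_der hA _ hq.
    have hg : forall i, i \in C -> g i = (C, q) by move=> i hi; rewrite /g (join_inE _ _ hi).
    have hag : C \in AD G g.
      rewrite mem_filter mem_enum andbT; apply/pbE; split => //; split.
        by move=> i hi; rewrite hg.
      have -> : chiD g C = conj (map (fun _ => q) (enum C)).
        by rewrite /chiD; congr conj; apply/eq_in_map => i; rewrite mem_enum => hi; rewrite hg.
      by apply: der_box_mono hd _; apply: pconst.
    case/set0Pn: nC => i0 hi0.
    have h1 := pImp_conj_mem (chiD g) hag.
    have hi0' : i0 \in enum C by rewrite mem_enum.
    have h2 := pImp_conj_mem (fun i => (g i).2) hi0'.
    rewrite /= hg // in h2.
    by simpl in h2; apply: pMP2 h1 h2 _; rewrite /Psi /chiD; taut.
Qed.

End Canon.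

Theorem mainTheorem9 (Th : signature) (phi : form Th) :
  valid phi -> provable phi.
Proof.
move=> hv; apply: NNPP => np.
have hin : List.In phi (Phi phi) by apply: sub_head.
have [G [hc hd]] := init_atom hin np.
have := hv (CM phi) G; rewrite (truth hin hc) => h.
exact: excl hc h hd.
Qed.
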